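(* Let $a,b$ be non-negative integers and $c=1$ such that $x^3-ax^2-bx-c$ has exactly one real root $\eta_1$, with $\eta_1>1$, and non-real roots $\eta_2$, $\eta_3=\overline{\eta_2}$. Let $\psi_2,\zeta_2$ be the complex constants such that for every $n\ge 3$ and all $k,l$, every sequence $\langle x_i\rangle_{i=1}^n$ satisfying $x_{i+3}=ax_{i+2}+bx_{i+1}+cx_i$ with $x_n=0$, $x_{n-1}=k$, $x_{n-2}=l$ is given by $x_i=\sum_{j=1}^3(k\psi_j+l\zeta_j)\eta_j^{n-i}$ for some constants $\psi_1,\zeta_1$ and $\psi_3=\overline{\psi_2}$, $\zeta_3=\overline{\zeta_2}$. For integers $k,l$ with $k\psi_2+l\zeta_2\neq 0$, let $\gamma(k,l)\in[0,2\pi)$ be the argument of $k\psi_2+l\zeta_2$. Then for any real $x<y$ with $[x,y]\subseteq[0,2\pi]$, there exist non-zero integers $k,l$ with $k\psi_2+l\zeta_2\neq0$ and $x<\gamma(k,l)<y$.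
   Context: The roots of the polynomial are distinct, so the constants $\psi_j,\zeta_j$ are uniquely determined by the polynomial. *)

(* Defs.v *)
From HB Require Import structures.
From mathcomp Require Import all_boot all_order all_algebra.
From mathcomp Require Import all_classical all_reals all_analysis.
From mathcomp Require Import complex.
Set Implicit Arguments. Unset Strict Implicit. Unset Printing Implicit Defensive.
Import Order.TTheory GRing.Theory Num.Theory.
Local Open Scope ring_scope.

Definition cubic (R : rcfType) (a b c : R) : {poly R[i]} :=
  'X^3 - (a%:C)%C *: 'X^2 - (b%:C)%C *: 'X - ((c%:C)%C)%:P.

Definition etas (R : rcfType) (e1 : R) (e2 : R[i]) (j : 'I_3) : R[i] :=
  if val j == 0%N then (e1%:C)%C else if val j == 1%N then e2 else (e2^*)%C.

(* The sequence x_i = sum_j (k psi_j + l zeta_j) eta_j^(n-i), written in the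
   variable m = n - i.  It has x_n = 0, x_{n-1} = k, x_{n-2} = l iff these
   equations hold for m = 0,1,2; this determines psi, zeta uniquely. *)
Definition closed_form (R : rcfType) (e1 : R) (e2 : R[i])
  (psi zeta : 'I_3 -> R[i]) (k l : R[i]) (m : nat) : R[i] :=
  \sum_(j < 3) (k * psi j + l * zeta j) * etas e1 e2 j ^+ m.

Definition is_arg (R : realType) (z : R[i]) (g : R) : Prop :=
  0 <= g < 2 * pi /\ complex.Re z = Num.sqrt (complex.Re z ^+ 2 + complex.Im z ^+ 2) * cos g /\ complex.Im z = Num.sqrt (complex.Re z ^+ 2 + complex.Im z ^+ 2) * sin g.

(* Main.v *)
Require Import Defs.
From HB Require Import structures.
From mathcomp Require Import all_boot all_order all_algebra.
From mathcomp Require Import all_classical all_reals all_analysis.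
From mathcomp Require Import complex.
From mathcomp Require Import ring lra.
Import Order.TTheory GRing.Theory Num.Theory.
Local Open Scope ring_scope.


Lemma round_nz (R : realType) (s : R) : exists k : int, k != 0 /\ `|k%:~R - s| <= 1.
Proof.
have [H|H] := eqVneq (Num.floor s) 0.
  exists 1; split => //.
  move: H => /eqP; rewrite floor_eq => /andP [h1 h2].
  rewrite add0r in h2. rewrite /= in h1 h2.
  rewrite ler_norml; apply/andP; split; lra.
exists (Num.floor s); split => //.
have := floor_itv s; rewrite intrD => /andP [h1 h2].
rewrite ler_norml; apply/andP; split; lra.
Qed.

Lemma my_lattice (R : realType) (a1 b1 a2 b2 X Y : R) : a1*b2 - a2*b1 != 0 ->
  exists k l : int, [/\ k != 0, l != 0,
    `|k%:~R*a1 + l%:~R*a2 - X| <= `|a1| + `|a2| &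
    `|k%:~R*b1 + l%:~R*b2 - Y| <= `|b1| + `|b2|].
Proof.
move=> hd.
set s := (X*b2 - Y*a2)/(a1*b2 - a2*b1).
set t := (a1*Y - b1*X)/(a1*b2 - a2*b1).
have eX : X = s*a1 + t*a2 by rewrite /s /t; field.
have eY : Y = s*b1 + t*b2 by rewrite /s /t; field.
have [k [k0 hk]] := @round_nz R s.
have [l [l0 hl]] := @round_nz R t.
exists k, l; split => //.
  have -> : k%:~R*a1 + l%:~R*a2 - X = (k%:~R - s)*a1 + (l%:~R - t)*a2 by rewrite eX; ring.
  apply: (le_trans (ler_normD _ _)); rewrite !normrM.
  apply: lerD; rewrite -[X in _ <= X]mul1r; apply: ler_wpM2r => //.
have -> : k%:~R*b1 + l%:~R*b2 - Y = (k%:~R - s)*b1 + (l%:~R - t)*b2 by rewrite eY; ring.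
apply: (le_trans (ler_normD _ _)); rewrite !normrM.
apply: lerD; rewrite -[X in _ <= X]mul1r; apply: ler_wpM2r => //.
Qed.


Lemma my_approx (R : realType) (C S M d : R) : C^+2 + S^+2 = 1 -> 0 < S -> 0 < d -> 0 <= M ->
 exists T : R, 0 < T /\ forall a b : R, `|a - T*C| <= M -> `|b - T*S| <= M ->
   0 < b /\ `|a / Num.sqrt (a^+2 + b^+2) - C| < d.
Proof.
move=> hCS hS hd hM.
have hMS : 0 <= M/S by rewrite divr_ge0 // ltW.
have hd2 : 0 < d^+2 by rewrite exprn_gt0.
have hMd : 0 <= 8*M/d^+2 by apply: divr_ge0; [apply: mulr_ge0|apply: ltW].
set T := 1 + 4*M + M/S + 8*M/d^+2.
have eTS : T*S = S*(1 + 4*M + 8*M/d^+2) + M by rewrite /T; field; rewrite ?gt_eqF.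
have TS : M < T*S.
  rewrite eTS; have : 0 < S*(1 + 4*M + 8*M/d^+2) by apply: mulr_gt0 => //; lra.
  lra.
have eTd : d^+2 * T = d^+2*(1 + 4*M + M/S) + 8*M by rewrite /T; field; rewrite ?gt_eqF.
have Td : 8*M < d^+2 * (T + 2*M).
  rewrite mulrDr eTd; have : 0 < d^+2*(1 + 4*M + M/S) by apply: mulr_gt0 => //; lra.
  have : 0 <= d^+2 * (2 * M) by apply: mulr_ge0; lra.
  lra.
have T1 : 1 + 4*M <= T by rewrite /T; lra.
exists T; split; first lra.
move=> a b ha hb.
have hC : -1 <= C <= 1 by apply/andP; split; nra.
have hS1 : -1 <= S <= 1 by apply/andP; split; nra.
have hCn : `|C| <= 1 by rewrite ler_norml.
have hSn : `|S| <= 1 by rewrite ler_norml.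
have hCe : -M <= C*(a - T*C) <= M.
  have : `|C*(a - T*C)| <= M.
    by rewrite normrM -[M]mul1r; apply: ler_pM.
  by rewrite ler_norml.
have hSe : -M <= S*(b - T*S) <= M.
  have : `|S*(b - T*S)| <= M.
    by rewrite normrM -[M]mul1r; apply: ler_pM.
  by rewrite ler_norml.
move: ha hb; rewrite !ler_norml => /andP [ha1 ha2] /andP [hb1 hb2].
move: hCe hSe => /andP [hCe1 hCe2] /andP [hSe1 hSe2].
have e1sq : (a - T*C)^+2 <= M^+2 by nra.
have e2sq : (b - T*S)^+2 <= M^+2 by nra.
have hb : 0 < b by lra.
split => //.
have hab : 0 < a^+2 + b^+2.
  have := sqr_ge0 a; have : 0 < b^+2 by rewrite exprn_gt0.
  lra.
set r := Num.sqrt (a^+2 + b^+2).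
have r2 : r^+2 = a^+2 + b^+2 by rewrite sqr_sqrtr // ltW.
have r0 : 0 < r by rewrite sqrtr_gt0.
have eab : a^+2 + b^+2 = T^+2 + 2*T*(C*(a - T*C) + S*(b - T*S)) + (a - T*C)^+2 + (b - T*S)^+2.
  have -> : T^+2 = T^+2 * (C^+2 + S^+2) by rewrite hCS mulr1.
  ring.
have hT0 : 0 <= T by lra.
have hX : 2*T*(C*(a - T*C) + S*(b - T*S)) <= 2*T*(2*M).
  by apply: ler_wpM2l; lra.
have rle : r <= T + 2*M.
  rewrite -(ler_pXn2r (n:=2%N)) // ?nnegrE; last lra; last exact: ltW.
  rewrite r2 eab.
  have := lerD (lerD hX e1sq) e2sq; have := sqr_ge0 M.
  lra.
have eX : a*C + b*S = T + (C*(a - T*C) + S*(b - T*S)).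
  have : a*C + b*S - (T + (C*(a - T*C) + S*(b - T*S))) = T*(C^+2 + S^+2 - 1) by ring.
  rewrite hCS subrr mulr0 => /eqP; rewrite subr_eq0 => /eqP //.
have hXge : T - 2*M <= a*C + b*S by lra.
set q := a / r; set p := b / r.
have qp : q^+2 + p^+2 = 1.
  by rewrite /q /p !expr_div_n -mulrDl -r2 divff // expf_neq0 // gt_eqF.
have eu : (q*C + p*S) * r = a*C + b*S by rewrite /q /p; field; rewrite gt_eqF.
have hXpos : 0 < a*C + b*S by lra.
have hu0 : 0 <= q*C + p*S.
  have -> : q*C + p*S = (a*C + b*S) / r by rewrite -eu mulrK // unitfE gt_eqF.
  by rewrite divr_ge0 // ltW.
have hu : T - 2*M <= (q*C + p*S) * (T + 2*M).
  apply: (le_trans hXge); rewrite -eu; exact: ler_wpM2l.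
have E : (q-C)^+2 + (p-S)^+2 = (q^+2+p^+2) + (C^+2+S^+2) - 2*(q*C+p*S) by ring.
rewrite qp hCS in E.
have hle : (q - C)^+2 <= 2 - 2*(q*C + p*S) by have := sqr_ge0 (p - S); lra.
have hsq : (q - C)^+2 * (T + 2*M) < d^+2 * (T + 2*M).
  have h2 : (q - C)^+2 * (T + 2*M) <= (2 - 2*(q*C + p*S)) * (T + 2*M).
    by apply: ler_wpM2r => //; lra.
  have e3 : (2 - 2*(q*C + p*S)) * (T + 2*M) = 2*(T+2*M) - 2*((q*C + p*S) * (T + 2*M)) by ring.
  rewrite e3 in h2.
  lra.
have hsq' : (q - C)^+2 < d^+2.
  by rewrite -(ltr_pM2r (_ : 0 < T + 2*M)) //; lra.
rewrite -(ltr_pXn2r (n:=2%N)) // ?nnegrE ?ltW // real_normK ?num_real //.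
Qed.


Lemma acos_in (R : realType) (f e c : R) : 0 < e -> 0 < f - e -> f + e < pi ->
  -1 <= c <= 1 -> cos (f + e) < c < cos (f - e) -> f - e < acos c < f + e.
Proof.
move=> he h1 h2 hc /andP [c1 c2].
have ht : acos c \in `[0, pi] by rewrite in_itv /= acos_ge0 // acos_lepi.
have hct : cos (acos c) = c by rewrite acosK // in_itv /=.
have hpi := pi_gt0 R.
have hm : f - e \in `[0, pi] by rewrite in_itv /=; apply/andP; split; lra.
have hp : f + e \in `[0, pi] by rewrite in_itv /=; apply/andP; split; lra.
apply/andP; split.
  by rewrite -(ltr_cos hm ht) hct.
by rewrite -(ltr_cos ht hp) hct.
Qed.

Lemma unit_bounds {R : realType} (a b : R) : 0 < a^+2 + b^+2 ->
  -1 <= a / Num.sqrt (a^+2 + b^+2) <= 1.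
Proof.
move=> hab; set r := Num.sqrt _.
have r2 : r^+2 = a^+2 + b^+2 by rewrite sqr_sqrtr // ltW.
have r0 : 0 < r by rewrite sqrtr_gt0.
have qp : (a/r)^+2 + (b/r)^+2 = 1.
  by rewrite !expr_div_n -mulrDl -r2 divff // expf_neq0 // gt_eqF.
have hb2 := sqr_ge0 (b/r).
move: qp hb2; set q := a/r; set p := (b/r)^+2 => qp hb2.
apply/andP; split; nra.
Qed.

Lemma r_sin_acos (R : realType) (a b : R) : 0 < a^+2 + b^+2 ->
  Num.sqrt (a^+2 + b^+2) * sin (acos (a / Num.sqrt (a^+2 + b^+2))) = `|b|.
Proof.
move=> hab; have hb := @unit_bounds R a b hab; move: hb.
set r := Num.sqrt _ => hb.
have r2 : r^+2 = a^+2 + b^+2 by rewrite sqr_sqrtr // ltW.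
have r0 : 0 < r by rewrite sqrtr_gt0.
rewrite sin_acos //.
have -> : r = Num.sqrt (r^+2) by rewrite sqrtr_sqr ger0_norm // ltW.
rewrite -sqrtrM ?sqr_ge0 //.
have -> : r^+2 * (1 - (a / Num.sqrt (r^+2))^+2) = b^+2.
  rewrite sqrtr_sqr ger0_norm ?ltW // expr_div_n mulrBr mulr1 mulrCA divff ?mulr1.
    by rewrite r2; ring.
  by rewrite expf_neq0 // gt_eqF.
by rewrite sqrtr_sqr.
Qed.

Lemma r_cos_acos (R : realType) (a b : R) : 0 < a^+2 + b^+2 ->
  Num.sqrt (a^+2 + b^+2) * cos (acos (a / Num.sqrt (a^+2 + b^+2))) = a.
Proof.
move=> hab; have hb := @unit_bounds R a b hab; move: hb.
set r := Num.sqrt _ => hb.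
have r0 : 0 < r by rewrite sqrtr_gt0.
rewrite acosK ?in_itv //= mulrC divfK // gt_eqF //.
Qed.

Lemma twopi (R : realType) : 2 * pi = pi *+ 2 :> R.
Proof. by rewrite mulr_natl. Qed.

Lemma cos2piB (R : realType) (t : R) : cos (2 * pi - t) = cos t.
Proof. by rewrite cosB twopi cos2pi sin2pi mul1r mul0r addr0. Qed.
Lemma sin2piB (R : realType) (t : R) : sin (2 * pi - t) = - sin t.
Proof. by rewrite sinB twopi cos2pi sin2pi mul1r mul0r sub0r. Qed.


Lemma my_key {R : rcfType} (e1 : R) (e2 : R[i]) (w : 'I_3 -> R[i]) :
  w (inord 1) * ((e2 - (e1%:C)%C)*(e2 - (e2^*)%C)) =
  (\sum_(j<3) w j * etas e1 e2 j ^+ 2) - ((e1%:C)%C + (e2^*)%C) * (\sum_(j<3) w j * etas e1 e2 j ^+ 1)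
   + (e1%:C)%C*(e2^*)%C*(\sum_(j<3) w j * etas e1 e2 j ^+ 0).
Proof.
rewrite !big_ord_recl !big_ord0 /etas /=.
have -> : lift ord0 ord0 = inord 1 :> 'I_3 by apply: val_inj; rewrite /= inordK.
ring.
Qed.

Lemma my_alg (R : rcfType) (e1 : R) (e2 : R[i]) (psi zeta : 'I_3 -> R[i]) :
  (forall k l : R[i],
     [/\ closed_form e1 e2 psi zeta k l 0 = 0,
         closed_form e1 e2 psi zeta k l 1 = k &
         closed_form e1 e2 psi zeta k l 2 = l]) ->
  zeta (inord 1) != 0 /\ psi (inord 1) = - ((e1%:C)%C + (e2^*)%C) * zeta (inord 1).
Proof.
move=> hcf.
have [a0 a1 a2] := hcf 1 0.
have [b0 b1 b2] := hcf 0 1.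
set E := (e1%:C)%C; set f := (e2^*)%C.
have hp : (1 * psi (inord 1) + 0 * zeta (inord 1)) * ((e2 - E)*(e2 - f)) =
  closed_form e1 e2 psi zeta 1 0 2 - (E + f) * closed_form e1 e2 psi zeta 1 0 1
   + E * f * closed_form e1 e2 psi zeta 1 0 0 := my_key e1 e2 (fun j => 1 * psi j + 0 * zeta j).
have hz : (0 * psi (inord 1) + 1 * zeta (inord 1)) * ((e2 - E)*(e2 - f)) =
  closed_form e1 e2 psi zeta 0 1 2 - (E + f) * closed_form e1 e2 psi zeta 0 1 1
   + E * f * closed_form e1 e2 psi zeta 0 1 0 := my_key e1 e2 (fun j => 0 * psi j + 1 * zeta j).
rewrite a0 a1 a2 in hp. rewrite b0 b1 b2 in hz.
rewrite mul1r mul0r addr0 in hp. rewrite mul1r mul0r add0r in hz.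
set D := ((e2 - E)*(e2 - f)) in hp hz.
have hz' : zeta (inord 1) * D = 1 by rewrite hz; ring.
split.
  by apply/eqP => h; move: hz'; rewrite h mul0r => /eqP; rewrite eq_sym oner_eq0.
have hp' : psi (inord 1) * D = - (E + f) by rewrite hp; ring.
rewrite -[psi _]mulr1 -hz' mulrCA -hp'.
ring.
Qed.


Lemma ReIm_w (R : realType) (k l : int) (p z : R[i]) :
  complex.Re (k%:~R * p + l%:~R * z) = k%:~R * complex.Re p + l%:~R * complex.Re z /\
  complex.Im (k%:~R * p + l%:~R * z) = k%:~R * complex.Im p + l%:~R * complex.Im z.
Proof.
have hk : (k%:~R : R[i]) = ((k%:~R : R)%:C)%C by rewrite rmorph_int.
have hl : (l%:~R : R[i]) = ((l%:~R : R)%:C)%C by rewrite rmorph_int.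
rewrite hk hl; case: p => a b; case: z => c d /=; split; ring.
Qed.

Lemma my_step (R : realType) (p z : R[i]) (f e : R) (s : bool) :
  complex.Re p * complex.Im z - complex.Re z * complex.Im p != 0 -> 0 < e -> 0 < f - e -> f + e < pi ->
  exists k l : int, [/\ k != 0, l != 0,
    (if s then 0 < complex.Im (k%:~R * p + l%:~R * z) else complex.Im (k%:~R * p + l%:~R * z) < 0) &
    f - e < acos (complex.Re (k%:~R * p + l%:~R * z) /
       Num.sqrt (complex.Re (k%:~R * p + l%:~R * z) ^+ 2 + complex.Im (k%:~R * p + l%:~R * z) ^+ 2)) < f + e].
Proof.
move=> hdet he h1 h2.
set C := cos f; set S := sin f.
have hS : 0 < S by apply: sin_gt0_pi; apply/andP; split; lra.
have hCS : C^+2 + S^+2 = 1 by apply: cos2Dsin2.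
have hpi := pi_gt0 R.
have hm : f - e \in `[0, pi] by rewrite in_itv /=; apply/andP; split; lra.
have hp : f + e \in `[0, pi] by rewrite in_itv /=; apply/andP; split; lra.
have hf : f \in `[0, pi] by rewrite in_itv /=; apply/andP; split; lra.
have d1 : 0 < cos (f - e) - C by rewrite subr_gt0 /C (ltr_cos hm hf); lra.
have d2 : 0 < C - cos (f + e) by rewrite subr_gt0 /C (ltr_cos hf hp); lra.
have [d [hd hd1 hd2]] : exists d, [/\ 0 < d, d <= cos (f - e) - C & d <= C - cos (f + e)].
  have [h|h] := lerP (cos (f - e) - C) (C - cos (f + e)).
    by exists (cos (f - e) - C); split.
  by exists (C - cos (f + e)); split => //; apply: ltW.
set M := `|complex.Re p| + `|complex.Re z| + `|complex.Im p| + `|complex.Im z|.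
have hM : 0 <= M by rewrite /M; have := normr_ge0 (complex.Re p); have := normr_ge0 (complex.Re z);
  have := normr_ge0 (complex.Im p); have := normr_ge0 (complex.Im z); lra.
have [T [hT0 hT]] := @my_approx R _ _ _ _ hCS hS hd hM.
have [k [l [hk hl hre him]]] := @my_lattice R _ _ _ _ (T * C) (if s then T * S else - (T * S)) hdet.
exists k, l.
have [eRe eIm] := @ReIm_w R k l p z.
set w := k%:~R * p + l%:~R * z.
have hre' : `|complex.Re w - T * C| <= M.
  rewrite eRe; apply: (le_trans hre); rewrite /M.
  have := normr_ge0 (complex.Im p); have := normr_ge0 (complex.Im z); lra.
have him' : `|(if s then complex.Im w else - complex.Im w) - T * S| <= M.
  have : `|complex.Im w - (if s then T * S else - (T * S))| <= M.
    rewrite eIm; apply: (le_trans him); rewrite /M.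
    have := normr_ge0 (complex.Re p); have := normr_ge0 (complex.Re z); lra.
  case: s {him hT} => // h; rewrite -normrN.
  by have -> : - (- complex.Im w - T * S) = complex.Im w - - (T * S) by ring.
have [hb hc] := hT _ _ hre' him'.
have hsq : (if s then complex.Im w else - complex.Im w) ^+ 2 = complex.Im w ^+ 2 by case: s {him' hb hc hT him} => //; rewrite sqrrN.
rewrite hsq in hc.
have hab : 0 < complex.Re w ^+ 2 + complex.Im w ^+ 2.
  have : 0 < complex.Im w ^+ 2 by rewrite -hsq exprn_gt0.
  have := sqr_ge0 (complex.Re w); lra.
have hub := @unit_bounds R (complex.Re w) (complex.Im w) hab.
split => //.
  by case: s {him' hc hT him hsq} hb => // hb; rewrite oppr_gt0 in hb.
apply: acos_in => //.
move: hc; rewrite ltr_norml => /andP [c1 c2]; apply/andP; split; lra.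
Qed.

Theorem corollary3 (R : realType) (a b : nat) (eta1 : R) (eta2 : R[i])
    (psi zeta : 'I_3 -> R[i]) :
  let c : R := 1 in
  (* roots of x^3 - a x^2 - b x - c are exactly eta1 (real), eta2, conj eta2 *)
  (forall z : R[i], root (cubic a%:R b%:R c) z =
     [|| z == (eta1%:C)%C, z == eta2 | z == (eta2^*)%C]) ->
  complex.Im eta2 != 0 ->
  1 < eta1 ->
  (* psi, zeta: the constants of the closed form with x_n = 0, x_{n-1} = k,
     x_{n-2} = l, for all k, l *)
  (forall k l : R[i],
     [/\ closed_form eta1 eta2 psi zeta k l 0 = 0,
         closed_form eta1 eta2 psi zeta k l 1 = k &
         closed_form eta1 eta2 psi zeta k l 2 = l]) ->
  forall x y : R, x < y -> 0 <= x -> y <= 2 * pi ->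
  exists k l : int, [/\ k != 0, l != 0,
    k%:~R * psi (inord 1) + l%:~R * zeta (inord 1) != 0 &
    exists g : R, is_arg (k%:~R * psi (inord 1) + l%:~R * zeta (inord 1)) g
                  /\ x < g < y].
Proof.
move=> c _ hIm _ hcf x y hxy hx hy.
have [hz0 hpz] := @my_alg R _ _ _ _ hcf.
have gen : forall (w0 u : R[i]), w0 != 0 -> complex.Im u != 0 ->
  complex.Re (- ((eta1%:C)%C + (u^*)%C) * w0) * complex.Im w0
   - complex.Re w0 * complex.Im (- ((eta1%:C)%C + (u^*)%C) * w0) != 0.
  move=> [c0 d0] [u v] /= hw0 hv.
  rewrite (_ : _ * d0 - _ = - v * (c0^+2 + d0^+2)); last by ring.
  rewrite mulf_neq0 ?oppr_eq0 //.
  apply/eqP => h; move: hw0; rewrite eq_complex /= negb_and.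
  have h0 : c0 = 0 /\ d0 = 0 by split; nra.
  by case: h0 => -> ->; rewrite eqxx.
set p := psi (inord 1) in hpz *; set z := zeta (inord 1) in hz0 hpz *.
have hdet : complex.Re p * complex.Im z - complex.Re z * complex.Im p != 0.
  by rewrite hpz; apply: gen.
have hpi := pi_gt0 R.
have [t [e [he hxe hey hcase]]] : exists t e : R, [/\ 0 < e, x <= t - e, t + e <= y &
    (0 < t - e /\ t + e < pi) \/ (pi < t - e /\ t + e < 2 * pi)].
  have [hxp|hxp] := ltrP x pi.
    have [hyp|hyp] := lerP y pi.
      exists ((x + y) / 2), ((y - x) / 4); split; try lra; left; split; lra.
    exists ((x + pi) / 2), ((pi - x) / 4); split; try lra; left; split; lra.
  exists ((x + y) / 2), ((y - x) / 4); split; try lra; right; split; lra.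
case: hcase => [[h1 h2]|[h1 h2]].
  have [k [l [hk hl hIm' hg]]] := @my_step R _ _ _ _ true hdet he h1 h2.
  have [eRe eIm] := @ReIm_w R k l p z.
  exists k, l; set w := k%:~R * p + l%:~R * z in hIm' hg *.
  have hab : 0 < complex.Re w ^+ 2 + complex.Im w ^+ 2.
    have : 0 < complex.Im w ^+ 2 by rewrite exprn_gt0.
    have := sqr_ge0 (complex.Re w); lra.
  split => //.
    by apply/eqP => h; move: hIm'; rewrite h /= ltxx.
  exists (acos (complex.Re w / Num.sqrt (complex.Re w ^+ 2 + complex.Im w ^+ 2))).
  move: hg => /andP [g1 g2].
  split; last by apply/andP; split; lra.
  split; first by apply/andP; split; lra.
  split; first by rewrite r_cos_acos.
  by rewrite r_sin_acos // gtr0_norm.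
have h1' : 0 < (2 * pi - t) - e by lra.
have h2' : (2 * pi - t) + e < pi by lra.
have [k [l [hk hl hIm' hg]]] := @my_step R _ _ _ _ false hdet he h1' h2'.
exists k, l; set w := k%:~R * p + l%:~R * z in hIm' hg *.
have hab : 0 < complex.Re w ^+ 2 + complex.Im w ^+ 2.
  have : 0 < complex.Im w ^+ 2 by rewrite -sqrrN exprn_gt0 // oppr_gt0.
  have := sqr_ge0 (complex.Re w); lra.
split => //.
  by apply/eqP => h; move: hIm'; rewrite h /= ltxx.
exists (2 * pi - acos (complex.Re w / Num.sqrt (complex.Re w ^+ 2 + complex.Im w ^+ 2))).
move: hg => /andP [g1 g2].
split; last by apply/andP; split; lra.
split; first by apply/andP; split; lra.
split; first by rewrite cos2piB r_cos_acos.
by rewrite sin2piB mulrN r_sin_acos // ltr0_norm // opprK.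
Qed.
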